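(* Let $0<\alpha,\beta<1$, $a\in(0,1]$ and $N$ even. The spectral projections $F_{a,1,N}(w)$ and $F_{a,2,N}(w)$ of $\phi_{a,N}(w)$ are analytic at $w=a^2$ and at $w=a^{-2}$ (i.e. have no poles there).
   Context: For $\varepsilon\in\{\alpha,\beta\}$ and $a\in(0,1]$ let $$\Phi_{\varepsilon,a}(z)=\frac{1}{(1-a^2z^{-1})^2}\begin{pmatrix}1&\frac{\varepsilon^2}{az}\\ \frac{1}{\varepsilon^2a}&1\end{pmatrix}\begin{pmatrix}1&\frac{\varepsilon^2a}{z}\\ \frac{a}{\varepsilon^2}&1\end{pmatrix}\begin{pmatrix}1&\frac{1}{az}\\ \frac1a&1\end{pmatrix}\begin{pmatrix}1&\frac az\\ a&1\end{pmatrix},$$ $\phi_{a,N}(z)=\Phi_{\alpha,a}(z)^{N/2}\Phi_{\beta,a}(z)^{N/2}$. Its eigenvalues $r_{a,1,N},r_{a,2,N}=\frac12\big(\operatorname{tr}\phi_{a,N}\pm\sqrt{(\operatorname{tr}\phi_{a,N})^2-4\det\phi_{a,N}}\big)$ are labeled so that $r_{a,1,N}$ has the pole at $w=a^2$; $F_{a,k,N}(w)=E_{a,N}(w)P_kE_{a,N}(w)^{-1}$ with $E_{a,N}$ an eigenvector matrix for this ordering, $P_1=\operatorname{diag}(1,0)$, $P_2=\operatorname{diag}(0,1)$, so $\phi_{a,N}=r_{a,1,N}F_{a,1,N}+r_{a,2,N}F_{a,2,N}$ and $F_{a,1,N}+F_{a,2,N}=I$. *)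

(* Defs.v *)
From Stdlib Require Import Reals Arith.
From Coquelicot Require Import Coquelicot.
Open Scope C_scope.

Record M2 := mkM2 { m11 : C; m12 : C; m21 : C; m22 : C }.

Definition M2mul (A B : M2) : M2 :=
  mkM2 (m11 A * m11 B + m12 A * m21 B) (m11 A * m12 B + m12 A * m22 B)
       (m21 A * m11 B + m22 A * m21 B) (m21 A * m12 B + m22 A * m22 B).
Definition M2scale (c : C) (A : M2) : M2 :=
  mkM2 (c * m11 A) (c * m12 A) (c * m21 A) (c * m22 A).
Definition M2id : M2 := mkM2 1 0 0 1.
Fixpoint M2pow (A : M2) (n : nat) : M2 :=
  match n with O => M2id | S k => M2mul A (M2pow A k) end.
Definition M2tr (A : M2) : C := m11 A + m22 A.
Definition M2det (A : M2) : C := m11 A * m22 A - m12 A * m21 A.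
(* inverse via the adjugate (meaningful when det A <> 0) *)
Definition M2inv (A : M2) : M2 :=
  M2scale (/ M2det A) (mkM2 (m22 A) (- m12 A) (- m21 A) (m11 A)).
Definition M2diag (x y : C) : M2 := mkM2 x 0 0 y.
Definition P1 : M2 := M2diag 1 0.
Definition P2 : M2 := M2diag 0 1.

Definition Phi (eps a : R) (z : C) : M2 :=
  let e := RtoC eps in let a' := RtoC a in
  M2scale (/ ((1 - a' ^ 2 / z) ^ 2))
    (M2mul (mkM2 1 (e ^ 2 / (a' * z)) (/ (e ^ 2 * a')) 1)
    (M2mul (mkM2 1 (e ^ 2 * a' / z) (a' / e ^ 2) 1)
    (M2mul (mkM2 1 (/ (a' * z)) (/ a') 1)
           (mkM2 1 (a' / z) a' 1)))).

Definition phi (alpha beta a : R) (N : nat) (z : C) : M2 :=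
  M2mul (M2pow (Phi alpha a z) (N / 2)) (M2pow (Phi beta a z) (N / 2)).

Definition analytic_at (f : C -> C) (w0 : C) : Prop :=
  exists (d : R) (c : nat -> C), (0 < d)%R /\
    forall w, (Cmod (w - w0) < d)%R -> is_pseries c (w - w0) (f w).

Definition M2analytic_at (F : C -> M2) (w0 : C) : Prop :=
  analytic_at (fun w => m11 (F w)) w0 /\ analytic_at (fun w => m12 (F w)) w0 /\
  analytic_at (fun w => m21 (F w)) w0 /\ analytic_at (fun w => m22 (F w)) w0.

(* (F1, F2) are the spectral projections of the matrix A, in the sense of the
   paper: A has two distinct eigenvalues r1, r2 (the roots of
   r^2 - tr A r + det A), E is an eigenvector matrix for the ordering (r1, r2),
   and F_k = E P_k E^{-1}. *)
Definition spectral_projections (A F1 F2 : M2) : Prop :=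
  exists (r1 r2 : C) (E : M2),
    r1 <> r2 /\ r1 + r2 = M2tr A /\ r1 * r2 = M2det A /\
    M2det E <> 0 /\ M2mul A E = M2mul E (M2diag r1 r2) /\
    F1 = M2mul E (M2mul P1 (M2inv E)) /\ F2 = M2mul E (M2mul P2 (M2inv E)).

(* The spectral projections of phi_{a,N} are analytic at w0 (have no pole
   there): on a punctured disc around w0 they are given by two matrix
   functions F1, F2 which are analytic at w0. *)
Definition projections_analytic_at (alpha beta a : R) (N : nat) (w0 : C) : Prop :=
  exists (d : R) (F1 F2 : C -> M2), (0 < d)%R /\
    M2analytic_at F1 w0 /\ M2analytic_at F2 w0 /\
    forall w, (0 < Cmod (w - w0) < d)%R ->
      spectral_projections (phi alpha beta a N w) (F1 w) (F2 w).

(* Main.v *)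
Require Import Defs.
From Stdlib Require Import Reals Arith Lia Lra Psatz.
From Coquelicot Require Import Coquelicot.
Open Scope C_scope.

Fixpoint cs (f : nat -> C) (n : nat) : C :=
  match n with O => 0 | S m => cs f m + f m end.
Fixpoint rs (f : nat -> R) (n : nat) : R :=
  match n with O => 0%R | S m => (rs f m + f m)%R end.

Lemma cs_ext f g n : (forall k, (k < n)%nat -> f k = g k) -> cs f n = cs g n.
Proof. induction n; intros H; simpl; auto. rewrite IHn by (intros; apply H; lia). rewrite H by lia. auto. Qed.
Lemma rs_ext f g n : (forall k, (k < n)%nat -> f k = g k) -> rs f n = rs g n.
Proof. induction n; intros H; simpl; auto. rewrite IHn by (intros; apply H; lia). rewrite H by lia. auto. Qed.
Lemma rs_le f g n : (forall k, (k < n)%nat -> f k <= g k)%R -> (rs f n <= rs g n)%R.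
Proof. induction n; intros H; simpl. lra. assert (f n <= g n)%R by (apply H; lia).
  assert (rs f n <= rs g n)%R by (apply IHn; intros; apply H; lia). lra. Qed.
Lemma cs_shift f n : cs f (S n) = f O + cs (fun k => f (S k)) n.
Proof. induction n. simpl. ring. change (cs f (S (S n))) with (cs f (S n) + f (S n)). rewrite IHn. simpl. ring. Qed.
Lemma rs_shift f n : rs f (S n) = (f O + rs (fun k => f (S k)) n)%R.
Proof. induction n. simpl. ring. change (rs f (S (S n))) with (rs f (S n) + f (S n))%R. rewrite IHn. simpl. ring. Qed.
Lemma rs_scal c f n : rs (fun k => c * f k)%R n = (c * rs f n)%R.
Proof. induction n; simpl. ring. rewrite IHn. ring. Qed.
Lemma rs_plus f g n : rs (fun k => f k + g k)%R n = (rs f n + rs g n)%R.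
Proof. induction n; simpl. ring. rewrite IHn. ring. Qed.
Lemma rs_minus f g n : rs (fun k => f k - g k)%R n = (rs f n - rs g n)%R.
Proof. induction n; simpl. ring. rewrite IHn. ring. Qed.
Lemma cs_plus f g n : cs (fun k => f k + g k) n = cs f n + cs g n.
Proof. induction n; simpl. ring. rewrite IHn. ring. Qed.
Lemma cs_scal c f n : cs (fun k => c * f k) n = c * cs f n.
Proof. induction n; simpl. ring. rewrite IHn. ring. Qed.
Lemma cs_norm f n : (Cmod (cs f n) <= rs (fun k => Cmod (f k)) n)%R.
Proof. induction n; simpl. rewrite Cmod_0. lra. eapply Rle_trans. apply Cmod_triangle. lra. Qed.
Lemma rs_nonneg f n : (forall k, 0 <= f k)%R -> (0 <= rs f n)%R.
Proof. intros H; induction n; simpl. lra. specialize (H n). lra. Qed.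
Lemma rs_const_bound f n B : (forall k, (k < n)%nat -> f k <= B)%R -> (rs f n <= INR n * B)%R.
Proof. induction n; intros H; simpl rs. simpl; lra. rewrite S_INR.
  assert (f n <= B)%R by (apply H; lia). assert (rs f n <= INR n * B)%R by (apply IHn; intros; apply H; lia). lra. Qed.
Lemma rs_refl f n : rs f n = rs (fun i => f (n - 1 - i)%nat) n.
Proof. induction n. reflexivity. rewrite (rs_shift (fun i => f (S n - 1 - i)%nat)).
  replace (S n - 1 - 0)%nat with n by lia. simpl rs at 1. rewrite IHn.
  rewrite (rs_ext (fun k => f (S n - 1 - S k)%nat) (fun i => f (n - 1 - i)%nat)). ring.
  intros; f_equal; lia. Qed.
Lemma rs_sum_f_R0 f n : sum_f_R0 f n = rs f (S n).
Proof. induction n; simpl. ring. simpl in IHn. rewrite IHn. reflexivity. Qed.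
Lemma Re_cs f n : Re (cs f n) = rs (fun k => Re (f k)) n.
Proof. induction n; simpl. reflexivity. rewrite <- IHn. reflexivity. Qed.
Lemma Im_cs f n : Im (cs f n) = rs (fun k => Im (f k)) n.
Proof. induction n; simpl. reflexivity. rewrite <- IHn. reflexivity. Qed.

Lemma Re_sum_n (u : nat -> C) N : Re (sum_n u N) = sum_n (fun n => Re (u n)) N.
Proof. induction N. rewrite !sum_O. reflexivity. rewrite !sum_Sn, <- IHN. reflexivity. Qed.
Lemma Im_sum_n (u : nat -> C) N : Im (sum_n u N) = sum_n (fun n => Im (u n)) N.
Proof. induction N. rewrite !sum_O. reflexivity. rewrite !sum_Sn, <- IHN. reflexivity. Qed.

Lemma is_series_C (u : nat -> C) l : is_series u l <->
  is_series (fun n => Re (u n)) (Re l) /\ is_series (fun n => Im (u n)) (Im l).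
Proof.
  unfold is_series. split.
  - intros H. split; apply filterlim_locally; intros eps;
    generalize (proj1 (filterlim_locally _ _) H eps); apply filter_imp; intros n Hn;
    assert (HH : ball (Re l) eps (Re (sum_n u n)) /\ ball (Im l) eps (Im (sum_n u n))) by exact Hn.
    + rewrite <- Re_sum_n. apply HH.
    + rewrite <- Im_sum_n. apply HH.
  - intros [H1 H2]. apply filterlim_locally. intros eps.
    generalize (filter_and _ _ (proj1 (filterlim_locally _ _) H1 eps) (proj1 (filterlim_locally _ _) H2 eps)).
    apply filter_imp. intros n [A B].
    change (ball (Re l) eps (Re (sum_n u n)) /\ ball (Im l) eps (Im (sum_n u n))).
    rewrite Re_sum_n, Im_sum_n. split; auto.
Qed.

Lemma is_series_C_unique (u : nat -> C) l1 l2 : is_series u l1 -> is_series u l2 -> l1 = l2.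
Proof.
  intros H1 H2. apply is_series_C in H1. apply is_series_C in H2.
  destruct H1 as [A1 B1], H2 as [A2 B2].
  apply is_series_unique in A1. apply is_series_unique in A2.
  apply is_series_unique in B1. apply is_series_unique in B2.
  destruct l1 as [x1 y1], l2 as [x2 y2]; simpl in *. f_equal; congruence.
Qed.

Definition Csr (u : nat -> C) : C := (Series (fun n => Re (u n)), Series (fun n => Im (u n))).

Definition gbound (u : nat -> C) := exists M q, (0 <= q < 1)%R /\ forall n, (Cmod (u n) <= M * q ^ n)%R.

Lemma gbound_ex_abs u : gbound u -> ex_series (fun n => Cmod (u n)).
Proof.
  intros [M [q [Hq H]]]. apply (@ex_series_le R_AbsRing R_CompleteNormedModule _ (fun n => M * q ^ n)%R).
  intros n. unfold norm; simpl. unfold abs; simpl. rewrite Rabs_pos_eq. apply H. apply Cmod_ge_0.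
  apply (ex_series_scal M (fun n => q ^ n)%R). apply ex_series_geom. rewrite Rabs_pos_eq; lra.
Qed.

Lemma im_le_Cmod c : (Rabs (Im c) <= Cmod c)%R.
Proof. destruct c as [x y]. unfold Cmod; simpl. rewrite <- sqrt_Rsqr_abs. apply sqrt_le_1_alt.
  unfold Rsqr. nra. Qed.

Lemma gbound_Re u : gbound u -> ex_series (fun n => Rabs (Re (u n))).
Proof. intros H. apply gbound_ex_abs in H. apply (@ex_series_le R_AbsRing R_CompleteNormedModule _ (fun n => Cmod (u n))); auto.
  intros n. unfold norm; simpl. unfold abs; simpl. rewrite Rabs_Rabsolu. apply re_le_Cmod. Qed.
Lemma gbound_Im u : gbound u -> ex_series (fun n => Rabs (Im (u n))).
Proof. intros H. apply gbound_ex_abs in H. apply (@ex_series_le R_AbsRing R_CompleteNormedModule _ (fun n => Cmod (u n))); auto.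
  intros n. unfold norm; simpl. unfold abs; simpl. rewrite Rabs_Rabsolu. apply im_le_Cmod. Qed.

Lemma Csr_correct u : gbound u -> is_series u (Csr u).
Proof.
  intros H. apply is_series_C. simpl. split; apply Series_correct; apply ex_series_Rabs.
  apply gbound_Re; auto. apply gbound_Im; auto.
Qed.

Definition conv (c d : nat -> C) (n : nat) : C := cs (fun k => c k * d (n - k)%nat) (S n).

Lemma is_series_Cmult (u v : nat -> C) A B : gbound u -> gbound v ->
  is_series u A -> is_series v B -> is_series (conv u v) (A * B).
Proof.
  intros gu gv HA HB. apply is_series_C in HA. apply is_series_C in HB.
  destruct HA as [HA1 HA2], HB as [HB1 HB2].
  pose proof (gbound_Re _ gu) as ru. pose proof (gbound_Im _ gu) as iu.
  pose proof (gbound_Re _ gv) as rv. pose proof (gbound_Im _ gv) as iv.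
  pose proof (is_series_mult _ _ _ _ HA1 HB1 ru rv) as P11.
  pose proof (is_series_mult _ _ _ _ HA2 HB2 iu iv) as P22.
  pose proof (is_series_mult _ _ _ _ HA1 HB2 ru iv) as P12.
  pose proof (is_series_mult _ _ _ _ HA2 HB1 iu rv) as P21.
  apply is_series_C. split.
  - eapply is_series_ext; [|apply (is_series_minus _ _ _ _ P11 P22)].
    intros n. unfold conv. rewrite Re_cs, !rs_sum_f_R0. unfold minus.
    change (plus ?x (opp ?y)) with (Rminus x y).
    rewrite <- rs_minus. apply rs_ext. intros. destruct (u k), (v (n-k)%nat). simpl. ring.
  - eapply is_series_ext; [|apply (is_series_plus _ _ _ _ P12 P21)].
    intros n. unfold conv. rewrite Im_cs, !rs_sum_f_R0.
    change (plus ?x ?y) with (Rplus x y).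
    rewrite <- rs_plus. apply rs_ext. intros. destruct (u k), (v (n-k)%nat). simpl. ring.
Qed.

Lemma is_series_extC (a b : nat -> C) (l : C) : (forall n, @eq C (a n) (b n)) -> is_series a l -> is_series b l.
Proof. apply is_series_ext. Qed.

Lemma pow_n_C (x : C) n : pow_n x n = x ^ n.
Proof. induction n; simpl. reflexivity. rewrite IHn. reflexivity. Qed.

Lemma pser_iff c x l : is_pseries c x l <-> is_series (fun n => x ^ n * c n) l.
Proof. unfold is_pseries. split; apply is_series_ext; intros n.
  exact (f_equal (fun t => t * c n) (pow_n_C x n)). exact (f_equal (fun t => t * c n) (eq_sym (pow_n_C x n))). Qed.

Lemma Cpow_add (x : C) a b : x ^ (a + b) = x ^ a * x ^ b.
Proof. induction a; simpl. ring. rewrite IHa. ring. Qed.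

Lemma term_bound c r M x : (0 < r)%R -> (forall n, Cmod (c n) * r ^ n <= M)%R -> (Cmod x < r)%R ->
  gbound (fun n => x ^ n * c n).
Proof.
  intros Hr H Hx. exists M, (Cmod x / r)%R. split.
  split. apply Rmult_le_pos. apply Cmod_ge_0. left; apply Rinv_0_lt_compat; auto.
  apply Rmult_lt_reg_r with r; auto. unfold Rdiv. rewrite Rmult_assoc, Rinv_l by lra. lra.
  intros n. rewrite Cmod_mult, Cmod_pow.
  replace (Cmod x ^ n)%R with ((Cmod x / r) ^ n * r ^ n)%R.
  2:{ rewrite <- Rpow_mult_distr. unfold Rdiv. rewrite Rmult_assoc, Rinv_l by lra. f_equal; ring. }
  specialize (H n). assert (0 <= (Cmod x / r) ^ n)%R.
  apply pow_le. apply Rmult_le_pos. apply Cmod_ge_0. left; apply Rinv_0_lt_compat; auto.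
  rewrite Rmult_assoc. rewrite (Rmult_comm (r ^ n)). rewrite (Rmult_comm M). apply Rmult_le_compat_l; auto.
Qed.

Lemma sum_n_cs (u : nat -> C) N : sum_n u N = cs u (S N).
Proof. induction N. rewrite sum_O. simpl. ring. rewrite sum_Sn, IHN. reflexivity. Qed.

Lemma cs_tail (u : nat -> C) N n : (forall k, (N <= k)%nat -> u k = 0) -> (N <= n)%nat -> cs u n = cs u N.
Proof. intros H. induction n; intros Hn. replace N with O by lia. reflexivity.
  destruct (Nat.eq_dec N (S n)). subst; reflexivity.
  simpl. rewrite IHn by lia. rewrite H by lia. ring. Qed.

Lemma is_series_fin (u : nat -> C) N : (forall n, (N <= n)%nat -> u n = 0) -> is_series u (cs u N).
Proof.
  intros H. unfold is_series. apply filterlim_locally. intros eps. exists N. intros n Hn.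
  rewrite sum_n_cs. rewrite (cs_tail u N (S n)) by (auto; lia). apply ball_center.
Qed.

Lemma pser_at0 c l : is_series (fun n => 0 ^ n * c n) l -> l = c O.
Proof.
  intros H. eapply is_series_C_unique. apply H.
  replace (c O) with (cs (fun n => 0 ^ n * c n) 1) by (simpl; ring).
  apply is_series_fin. intros n Hn. destruct n. lia. simpl. ring.
Qed.

Lemma pser_mult c d x A B r M1 M2 : (0 < r)%R -> (forall n, Cmod (c n) * r ^ n <= M1)%R ->
  (forall n, Cmod (d n) * r ^ n <= M2)%R -> (Cmod x < r)%R ->
  is_series (fun n => x ^ n * c n) A -> is_series (fun n => x ^ n * d n) B ->
  is_series (fun n => x ^ n * conv c d n) (A * B).
Proof.
  intros Hr H1 H2 Hx HA HB.
  pose proof (is_series_Cmult _ _ _ _ (term_bound _ _ _ _ Hr H1 Hx) (term_bound _ _ _ _ Hr H2 Hx) HA HB) as P.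
  eapply is_series_ext; [|apply P]. intros n. unfold conv. rewrite <- cs_scal. apply cs_ext.
  intros k Hk. replace n with (k + (n - k))%nat at 3 by lia. rewrite Cpow_add. ring.
Qed.

Definition an (f : C -> C) (w0 : C) : Prop :=
  exists (c : nat -> C) (r M : R), (0 < r)%R /\ (forall n, Cmod (c n) * r ^ n <= M)%R /\
    forall w, (Cmod (w - w0) < r)%R -> is_series (fun n => (w - w0) ^ n * c n) (f w).

Lemma an_analytic f w0 : an f w0 -> analytic_at f w0.
Proof. intros [c [r [M [Hr [HM H]]]]]. exists r, c. split; [auto|]. intros w Hw. apply pser_iff. auto. Qed.

Lemma an_ext f g w0 : an f w0 -> (exists r, 0 < r /\ forall w, Cmod (w - w0) < r -> f w = g w)%R -> an g w0.
Proof.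
  intros [c [r [M [Hr [HM H]]]]] [r' [Hr' E]]. exists c, (Rmin r r'), M. split. apply Rmin_glb_lt; auto.
  split. intros n. eapply Rle_trans; [|apply (HM n)]. apply Rmult_le_compat_l. apply Cmod_ge_0.
  apply pow_incr. split. left; apply Rmin_glb_lt; auto. apply Rmin_l.
  intros w Hw. rewrite <- E. apply H. eapply Rlt_le_trans. apply Hw. apply Rmin_l.
  eapply Rlt_le_trans. apply Hw. apply Rmin_r.
Qed.

Lemma an_value f w0 : an f w0 -> exists c : nat -> C, f w0 = c O /\ exists r M, (0 < r)%R /\
  (forall n, Cmod (c n) * r ^ n <= M)%R /\
    forall w, (Cmod (w - w0) < r)%R -> is_series (fun n => (w - w0) ^ n * c n) (f w).
Proof.
  intros [c [r [M [Hr [HM H]]]]]. exists c. split. apply pser_at0.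
  assert (Hw : (Cmod (w0 - w0) < r)%R) by (replace (w0 - w0) with (RtoC 0) by ring; rewrite Cmod_0; auto).
  eapply is_series_ext; [|apply (H w0 Hw)]. intros n. replace (w0 - w0) with (RtoC 0) by ring. reflexivity.
  exists r, M. auto.
Qed.

Definition c0 (k : C) (n : nat) : C := match n with O => k | _ => 0 end.

Lemma an_const k w0 : an (fun _ => k) w0.
Proof.
  exists (c0 k), 1%R, (Cmod k). split. lra. split. intros n; rewrite pow1; destruct n; simpl. lra. rewrite Cmod_0. rewrite Rmult_1_r; apply Cmod_ge_0.
  intros w Hw. assert (HH := is_series_fin (fun n => (w - w0) ^ n * c0 k n) 1 ltac:(intros n Hn; destruct n; [lia|simpl; ring])).
  replace (cs (fun n => (w - w0) ^ n * c0 k n) 1) with k in HH by (simpl; ring). exact HH.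
Qed.

Definition c1 (w0 : C) (n : nat) : C := match n with O => w0 | 1%nat => 1 | _ => 0 end.

Lemma an_id w0 : an (fun w => w) w0.
Proof.
  exists (c1 w0), 1%R, (Cmod w0 + 1)%R. split. lra. split. intros n; rewrite pow1; destruct n as [|[|n]]; simpl.
  pose proof (Cmod_ge_0 w0); lra. rewrite Cmod_1. pose proof (Cmod_ge_0 w0); lra. rewrite Cmod_0. pose proof (Cmod_ge_0 w0); lra.
  intros w Hw. assert (HH := is_series_fin (fun n => (w - w0) ^ n * c1 w0 n) 2 ltac:(intros n Hn; destruct n as [|[|n]]; [lia|lia|simpl; ring])).
  replace (cs (fun n => (w - w0) ^ n * c1 w0 n) 2) with w in HH by (simpl; ring). exact HH.
Qed.

Lemma an_plus f g w0 : an f w0 -> an g w0 -> an (fun w => f w + g w) w0.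
Proof.
  intros [c [r [M [Hr [HM H]]]]] [d [s [N [Hs [HN H']]]]].
  exists (fun n => c n + d n), (Rmin r s), (M + N)%R. split. apply Rmin_glb_lt; auto. split.
  intros n. eapply Rle_trans. apply Rmult_le_compat_r. apply pow_le. left; apply Rmin_glb_lt; auto. apply Cmod_triangle.
  rewrite Rmult_plus_distr_r. apply Rplus_le_compat.
  eapply Rle_trans; [|apply (HM n)]. apply Rmult_le_compat_l. apply Cmod_ge_0. apply pow_incr. split. left; apply Rmin_glb_lt; auto. apply Rmin_l.
  eapply Rle_trans; [|apply (HN n)]. apply Rmult_le_compat_l. apply Cmod_ge_0. apply pow_incr. split. left; apply Rmin_glb_lt; auto. apply Rmin_r.
  intros w Hw. eapply is_series_extC; [|apply (is_series_plus _ _ _ _ (H w ltac:(eapply Rlt_le_trans; [apply Hw|apply Rmin_l])) (H' w ltac:(eapply Rlt_le_trans; [apply Hw|apply Rmin_r])))].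
  intros n. cbv beta. change (plus ?x ?y) with (Cplus x y). ring.
Qed.

Lemma an_scal k f w0 : an f w0 -> an (fun w => k * f w) w0.
Proof.
  intros [c [r [M [Hr [HM H]]]]]. exists (fun n => k * c n), r, (Cmod k * M)%R. split; auto. split.
  intros n. rewrite Cmod_mult, Rmult_assoc. apply Rmult_le_compat_l. apply Cmod_ge_0. auto.
  intros w Hw. eapply is_series_extC; [|apply (is_series_scal k _ _ (H w Hw))].
  intros n. cbv beta. change (scal ?x ?y) with (Cmult x y). ring.
Qed.

Lemma pow2_ge n : (INR (S n) <= 2 ^ n)%R.
Proof. induction n. simpl; lra. change (2 ^ S n)%R with (2 * 2 ^ n)%R. rewrite !S_INR in *. pose proof (pos_INR n). lra. Qed.

Lemma an_mult f g w0 : an f w0 -> an g w0 -> an (fun w => f w * g w) w0.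
Proof.
  intros [c [r1 [M1 [Hr1 [HM1 H1]]]]] [d [r2 [M2 [Hr2 [HM2 H2]]]]].
  set (r := Rmin r1 r2). assert (Hr : (0 < r)%R) by (apply Rmin_glb_lt; auto).
  assert (B1 : forall n, (Cmod (c n) * r ^ n <= M1)%R).
  { intros n. eapply Rle_trans; [|apply (HM1 n)]. apply Rmult_le_compat_l. apply Cmod_ge_0. apply pow_incr. split. lra. apply Rmin_l. }
  assert (B2 : forall n, (Cmod (d n) * r ^ n <= M2)%R).
  { intros n. eapply Rle_trans; [|apply (HM2 n)]. apply Rmult_le_compat_l. apply Cmod_ge_0. apply pow_incr. split. lra. apply Rmin_r. }
  assert (M1p : (0 <= M1)%R) by (specialize (B1 O); simpl in B1; pose proof (Cmod_ge_0 (c O)); lra).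
  assert (M2p : (0 <= M2)%R) by (specialize (B2 O); simpl in B2; pose proof (Cmod_ge_0 (d O)); lra).
  exists (conv c d), (r / 2)%R, (M1 * M2)%R. split. lra. split.
  - intros n. assert (E : (Cmod (conv c d n) * r ^ n <= INR (S n) * (M1 * M2))%R).
    { unfold conv. rewrite <- (Rmult_comm (r ^ n)). eapply Rle_trans. apply Rmult_le_compat_l. apply pow_le; lra. apply cs_norm.
      rewrite <- rs_scal. apply rs_const_bound. intros k Hk. rewrite Cmod_mult.
      replace (r ^ n)%R with (r ^ k * r ^ (n - k))%R by (rewrite <- pow_add; f_equal; lia).
      replace (r ^ k * r ^ (n - k) * (Cmod (c k) * Cmod (d (n - k)%nat)))%R with ((Cmod (c k) * r ^ k) * (Cmod (d (n - k)%nat) * r ^ (n - k)))%R by ring.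
      apply Rmult_le_compat; auto; apply Rmult_le_pos; try apply Cmod_ge_0; apply pow_le; lra. }
    replace ((r / 2) ^ n)%R with (r ^ n / 2 ^ n)%R by (unfold Rdiv; rewrite Rpow_mult_distr, pow_inv; auto).
    assert (P2 : (0 < 2 ^ n)%R) by (apply pow_lt; lra).
    unfold Rdiv. rewrite <- Rmult_assoc. apply Rmult_le_reg_r with (2 ^ n)%R; auto.
    rewrite Rmult_assoc, Rinv_l by lra. rewrite Rmult_1_r. eapply Rle_trans. apply E.
    rewrite Rmult_comm. apply Rmult_le_compat_l. apply Rmult_le_pos; auto. apply pow2_ge.
  - intros w Hw. apply (pser_mult c d (w - w0) (f w) (g w) r M1 M2); auto. lra.
    apply H1. apply Rlt_le_trans with r; [lra | apply Rmin_l].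
    apply H2. apply Rlt_le_trans with r; [lra | apply Rmin_r].
Qed.

Definition hh (n : nat) : R := (/ (INR n ^ 2))%R.
Definition WW (L : R) (n : nat) : R := (L ^ n * hh n)%R.

Lemma hh_0 : hh O = 0%R.
Proof. unfold hh. simpl. replace (0 * (0 * 1))%R with 0%R by ring. apply Rinv_0. Qed.
Lemma hh_nonneg n : (0 <= hh n)%R.
Proof. destruct n. rewrite hh_0. lra. unfold hh. left. apply Rinv_0_lt_compat. apply pow_lt. apply lt_0_INR. lia. Qed.
Lemma hh_le1 n : (hh n <= 1)%R.
Proof. destruct n. rewrite hh_0. lra. unfold hh. rewrite <- Rinv_1. apply Rinv_le_contravar. lra.
  assert (1 <= INR (S n))%R by (apply (le_INR 1); lia).
  assert (3 <= 3 ^ S n)%R by (simpl; pose proof (pow_R1_Rle 3 n ltac:(lra)); lra).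
  pose proof (pow2_ge_0 (INR (S n) - 1)). nra. Qed.
Lemma WW_nonneg L n : (0 <= L)%R -> (0 <= WW L n)%R.
Proof. intros. unfold WW. apply Rmult_le_pos. apply pow_le; auto. apply hh_nonneg. Qed.
Lemma WW_le L n : (0 <= L)%R -> (WW L n <= L ^ n)%R.
Proof. intros. unfold WW. rewrite <- (Rmult_1_r (L ^ n)) at 2. apply Rmult_le_compat_l. apply pow_le; auto. apply hh_le1. Qed.

Lemma key_ineq a b : (0 < a)%R -> (0 < b)%R ->
  (/ (a ^ 2) * / (b ^ 2) <= 2 * / ((a + b) ^ 2) * (/ (a ^ 2) + / (b ^ 2)))%R.
Proof.
  intros Ha Hb.
  assert (E1 : (/ (a ^ 2) * / (b ^ 2) = (a + b) ^ 2 * / (a ^ 2 * b ^ 2 * (a + b) ^ 2))%R) by (field; lra).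
  assert (E2 : (2 * / ((a + b) ^ 2) * (/ (a ^ 2) + / (b ^ 2)) = 2 * (a ^ 2 + b ^ 2) * / (a ^ 2 * b ^ 2 * (a + b) ^ 2))%R) by (field; lra).
  rewrite E1, E2. apply Rmult_le_compat_r. left; apply Rinv_0_lt_compat.
  apply Rmult_lt_0_compat; [apply Rmult_lt_0_compat|]; apply pow_lt; lra.
  assert (H := pow2_ge_0 (a-b)). replace (2*(a^2+b^2))%R with ((a+b)^2 + (a-b)^2)%R by ring. lra.
Qed.

Lemma sum_hh_aux m : (rs (fun k => hh (S k)) (S m) <= 2 - / INR (S m))%R.
Proof.
  induction m. simpl. unfold hh. simpl. replace (1 * (1 * 1))%R with 1%R by ring. rewrite Rinv_1. lra.
  change (rs (fun k => hh (S k)) (S (S m))) with (rs (fun k => hh (S k)) (S m) + hh (S (S m)))%R.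
  assert (Hx : (1 <= INR (S m))%R) by (apply (le_INR 1); lia).
  change (hh (S (S m))) with (/ (INR (S (S m)) ^ 2))%R. rewrite (S_INR (S m)).
  set (x := INR (S m)) in *.
  assert (/ (x + 1) ^ 2 <= / x - / (x + 1))%R.
  { replace (/ x - / (x + 1))%R with (/ (x * (x + 1)))%R by (field; lra).
    apply Rinv_le_contravar. nra. nra. }
  lra.
Qed.

Lemma sum_hh m : (rs (fun k => hh (S k)) m <= 2)%R.
Proof. destruct m. simpl; lra. pose proof (sum_hh_aux m). assert (0 < / INR (S m))%R.
  apply Rinv_0_lt_compat. apply lt_0_INR; lia. lra. Qed.

Lemma hh_pair i m : (i < m)%nat -> (hh (S i) * hh (m - i) <= 2 * hh (S m) * (hh (S i) + hh (m - i)))%R.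
Proof.
  intros H. unfold hh. replace (INR (S m)) with (INR (S i) + INR (m - i))%R.
  apply key_ineq; apply lt_0_INR; lia. rewrite <- plus_INR. f_equal. lia.
Qed.

Lemma wconv L m : (0 <= L)%R -> (rs (fun i => WW L (S i) * WW L (m - i)) m <= 8 * WW L (S m))%R.
Proof.
  intros HL.
  rewrite (rs_ext _ (fun i => L ^ S m * (hh (S i) * hh (m - i)))%R).
  2:{ intros k Hk. unfold WW. replace (L ^ S m)%R with (L ^ S k * L ^ (m - k))%R by (rewrite <- pow_add; f_equal; lia). ring. }
  rewrite rs_scal. unfold WW. rewrite Rmult_comm, (Rmult_comm (L ^ S m)), <- Rmult_assoc. apply Rmult_le_compat_r. apply pow_le; auto.
  eapply Rle_trans. apply rs_le. intros k Hk. apply (hh_pair k m Hk).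
  rewrite rs_scal, rs_plus.
  assert (R : rs (fun i => hh (m - i)) m = rs (fun k => hh (S k)) m).
  { rewrite (rs_refl (fun k => hh (S k))). apply rs_ext. intros k Hk. f_equal. lia. }
  rewrite R. pose proof (sum_hh m). pose proof (hh_nonneg (S m)). nra.
Qed.

Fixpoint vs (u b : nat -> C) (e : C) (n : nat) : nat -> C :=
  match n with
  | O => fun _ => 0
  | S m => let p := vs u b e m in
      fun j => if Nat.leb j m then p j else
        u (S m) + cs (fun i => b (S i) * p (m - i)%nat) m + e * cs (fun i => p (S i) * p (m - i)%nat) m
  end.
Definition qv (u b : nat -> C) (e : C) n := vs u b e n n.

Lemma vs_stable (u b : nat -> C) (e : C) m j : (j <= m)%nat -> vs u b e m j = qv u b e j.
Proof.
  revert j. induction m; intros j Hj. replace j with O by lia. reflexivity.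
  destruct (Nat.eq_dec j (S m)). subst. reflexivity.
  simpl. replace (Nat.leb j m) with true. apply IHm; lia. symmetry; apply Nat.leb_le; lia.
Qed.

Lemma qv_0 (u b : nat -> C) (e : C) : qv u b e O = 0.
Proof. reflexivity. Qed.

Lemma qv_S (u b : nat -> C) (e : C) m : qv u b e (S m) = u (S m) + cs (fun i => b (S i) * qv u b e (m - i)%nat) m
   + e * cs (fun i => qv u b e (S i) * qv u b e (m - i)%nat) m.
Proof.
  assert (E : vs u b e (S m) (S m) = if Nat.leb (S m) m then vs u b e m (S m) else
        u (S m) + cs (fun i => b (S i) * vs u b e m (m - i)%nat) m + e * cs (fun i => vs u b e m (S i) * vs u b e m (m - i)%nat) m) by reflexivity.
  unfold qv at 1. rewrite E. replace (Nat.leb (S m) m) with false by (symmetry; apply Nat.leb_gt; lia).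
  f_equal. f_equal. apply cs_ext; intros; rewrite vs_stable by lia; reflexivity.
  f_equal. apply cs_ext; intros; rewrite !vs_stable by lia; reflexivity.
Qed.

Lemma conv_S0 (c d : nat -> C) m : c O = 0 -> d O = 0 ->
  conv c d (S m) = cs (fun i => c (S i) * d (m - i)%nat) m.
Proof.
  intros H1 H2. unfold conv. rewrite cs_shift. simpl cs. rewrite H1. replace (m - m)%nat with O by lia. rewrite H2.
  rewrite Cmult_0_l, Cmult_0_r, Cplus_0_l, Cplus_0_r. reflexivity.
Qed.

Lemma qv_eq (u b : nat -> C) (e : C) n : u O = 0 -> b O = 0 -> qv u b e n = u n + conv b (qv u b e) n + e * conv (qv u b e) (qv u b e) n.
Proof.
  intros u0 b0. destruct n.
  - rewrite qv_0, u0. unfold conv. simpl. rewrite b0, qv_0. ring.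
  - rewrite qv_S, !conv_S0; try reflexivity; try exact b0.
Qed.

Lemma qv_bound (u b : nat -> C) (e : C) L : (0 <= L)%R -> (forall n, Cmod (u n) <= / 64 * WW L n)%R ->
  (forall n, Cmod (b n) <= / 64 * WW L n)%R -> (Cmod e <= 1)%R ->
  forall n, (Cmod (qv u b e n) <= / 16 * WW L n)%R.
Proof.
  intros HL Hu Hb He.
  assert (forall n j, (j <= n)%nat -> (Cmod (qv u b e j) <= / 16 * WW L j)%R).
  2:{ intros n. apply (H n n). lia. }
  induction n; intros j Hj.
  - replace j with O by lia. rewrite qv_0, Cmod_0. pose proof (WW_nonneg L O HL). lra.
  - destruct (Nat.eq_dec j (S n)); [|apply IHn; lia]. subst j.
    rewrite qv_S.
    assert (S1 : (Cmod (cs (fun i => (b (S i) * qv u b e (n - i)%nat)%C) n) <= /64 * /16 * (8 * WW L (S n)))%R).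
    { eapply Rle_trans. apply cs_norm. eapply Rle_trans. apply rs_le. intros k Hk. rewrite Cmod_mult.
      apply Rmult_le_compat. apply Cmod_ge_0. apply Cmod_ge_0. apply Hb. apply (IHn (n - k)%nat). lia.
      rewrite (rs_ext _ (fun i => /64 * /16 * (WW L (S i) * WW L (n - i)))%R) by (intros; ring).
      rewrite rs_scal. apply Rmult_le_compat_l. lra. apply wconv; auto. }
    assert (S2 : (Cmod (cs (fun i => (qv u b e (S i) * qv u b e (n - i)%nat)%C) n) <= /16 * /16 * (8 * WW L (S n)))%R).
    { eapply Rle_trans. apply cs_norm. eapply Rle_trans. apply rs_le. intros k Hk. rewrite Cmod_mult.
      apply Rmult_le_compat. apply Cmod_ge_0. apply Cmod_ge_0. apply (IHn (S k)). lia. apply (IHn (n - k)%nat). lia.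
      rewrite (rs_ext _ (fun i => /16 * /16 * (WW L (S i) * WW L (n - i)))%R) by (intros; ring).
      rewrite rs_scal. apply Rmult_le_compat_l. lra. apply wconv; auto. }
    eapply Rle_trans. apply Cmod_triangle. rewrite Cmod_mult.
    eapply Rle_trans. apply Rplus_le_compat. apply Cmod_triangle. apply Rle_refl.
    pose proof (Hu (S n)). pose proof (WW_nonneg L (S n) HL).
    assert (Cmod e * Cmod (cs (fun i => (qv u b e (S i) * qv u b e (n - i)%nat)%C) n) <= /16 * /16 * (8 * WW L (S n)))%R.
    { rewrite <- (Rmult_1_l (/16 * /16 * _)%R). apply Rmult_le_compat; auto. apply Cmod_ge_0. apply Cmod_ge_0. }
    lra.
Qed.

Lemma sq_le_3pow n : (INR n ^ 2 <= 3 ^ n)%R.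
Proof.
  induction n. simpl. lra. destruct n. simpl. lra.
  rewrite S_INR. change (3 ^ S (S n))%R with (3 * 3 ^ S n)%R.
  assert (1 <= INR (S n))%R by (apply (le_INR 1); lia).
  assert (3 <= 3 ^ S n)%R by (simpl; pose proof (pow_R1_Rle 3 n ltac:(lra)); lra).
  pose proof (pow2_ge_0 (INR (S n) - 1)). nra.
Qed.

Lemma pow_ge_base A n : (1 <= A)%R -> (1 <= n)%nat -> (A <= A ^ n)%R.
Proof. intros HA Hn. destruct n. lia. simpl. rewrite <- (Rmult_1_r A) at 1. apply Rmult_le_compat_l. lra.
  apply pow_R1_Rle; lra. Qed.

Lemma weight_from_geom (c : nat -> C) r M : (0 < r)%R -> (forall n, Cmod (c n) * r ^ n <= M)%R -> c O = 0 ->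
  forall n, (Cmod (c n) <= / 64 * WW (3 * (64 * M + 1) / r) n)%R.
Proof.
  intros Hr HM H0 n. assert (Mp : (0 <= M)%R) by (specialize (HM O); simpl in HM; pose proof (Cmod_ge_0 (c O)); lra).
  destruct n. rewrite H0, Cmod_0. unfold WW. rewrite hh_0. lra.
  set (A := (64 * M + 1)%R). set (m := S n).
  assert (rn : (0 < r ^ m)%R) by (apply pow_lt; lra).
  assert (E : (WW (3 * A / r) m = (3 ^ m * A ^ m) * hh m * / r ^ m)%R).
  { unfold WW. unfold Rdiv. rewrite !Rpow_mult_distr, pow_inv. ring. }
  rewrite E. assert (Hc : (Cmod (c m) <= M * / r ^ m)%R).
  { apply Rmult_le_reg_r with (r ^ m)%R; auto. rewrite Rmult_assoc, Rinv_l by lra. rewrite Rmult_1_r. apply HM. }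
  eapply Rle_trans. apply Hc.
  replace (/ 64 * (3 ^ m * A ^ m * hh m * / r ^ m))%R with ((/64 * (3 ^ m * A ^ m * hh m)) * / r ^ m)%R by ring.
  apply Rmult_le_compat_r. left; apply Rinv_0_lt_compat; auto.
  assert (Hm2 : (0 < INR m ^ 2)%R) by (apply pow_lt; apply lt_0_INR; unfold m; lia).
  assert (H3 := sq_le_3pow m).
  assert (HA : (A <= A ^ m)%R) by (apply pow_ge_base; unfold A, m; [lra|lia]).
  assert (Hm0 : INR m <> 0%R) by (apply not_0_INR; unfold m; lia).
  unfold hh. apply Rmult_le_reg_r with (INR m ^ 2)%R; auto.
  replace (/ 64 * (3 ^ m * A ^ m * / INR m ^ 2) * INR m ^ 2)%R with (/64 * (3 ^ m * A ^ m))%R by (field; auto).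
  assert (0 <= 3 ^ m)%R by (apply pow_le; lra).
  unfold A in *. nra.
Qed.

Lemma bound_mono (c : nat -> C) r r' M : (forall n, Cmod (c n) * r ^ n <= M)%R -> (0 <= r' <= r)%R ->
  forall n, (Cmod (c n) * r' ^ n <= M)%R.
Proof. intros H Hr n. eapply Rle_trans; [|apply (H n)]. apply Rmult_le_compat_l. apply Cmod_ge_0.
  apply pow_incr. auto. Qed.

Lemma bound_nonneg (c : nat -> C) r M : (forall n, Cmod (c n) * r ^ n <= M)%R -> (0 <= M)%R.
Proof. intros H. specialize (H O). simpl in H. pose proof (Cmod_ge_0 (c O)). lra. Qed.

Lemma an_quad (U Bf : C -> C) (e : C) w0 : an U w0 -> an Bf w0 -> U w0 = 0 -> Bf w0 = 0 -> (Cmod e <= 1)%R ->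
  exists V, an V w0 /\ V w0 = 0 /\ exists r, (0 < r)%R /\ forall w, (Cmod (w - w0) < r)%R ->
    V w = U w + Bf w * V w + e * (V w * V w).
Proof.
  intros aU aB U0 B0 He.
  destruct (an_value _ _ aU) as [u [Hu0 [r1 [M1 [Hr1 [HM1 HU]]]]]].
  destruct (an_value _ _ aB) as [b [Hb0 [r2 [M2 [Hr2 [HM2 HB]]]]]].
  assert (u0 : u O = 0) by congruence. assert (b0 : b O = 0) by congruence.
  set (rho := Rmin r1 r2). assert (Hrho : (0 < rho)%R) by (apply Rmin_glb_lt; auto).
  pose proof (bound_nonneg _ _ _ HM1). pose proof (bound_nonneg _ _ _ HM2).
  set (M := (M1 + M2)%R).
  assert (Bu : forall n, (Cmod (u n) * rho ^ n <= M)%R).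
  { intros n. eapply Rle_trans. apply (bound_mono u r1 rho M1 HM1). split. lra. apply Rmin_l. unfold M; lra. }
  assert (Bb : forall n, (Cmod (b n) * rho ^ n <= M)%R).
  { intros n. eapply Rle_trans. apply (bound_mono b r2 rho M2 HM2). split. lra. apply Rmin_r. unfold M; lra. }
  set (L := (3 * (64 * M + 1) / rho)%R).
  assert (HL : (0 < L)%R). { unfold L. unfold Rdiv. apply Rmult_lt_0_compat. unfold M; lra. apply Rinv_0_lt_compat; auto. }
  set (v := qv u b e).
  assert (Bv : forall n, (Cmod (v n) <= / 16 * WW L n)%R).
  { apply qv_bound; auto. lra. apply (weight_from_geom u rho M); auto. apply (weight_from_geom b rho M); auto. }
  assert (Bv' : forall n, (Cmod (v n) * (/ L) ^ n <= / 16)%R).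
  { intros n. pose proof (WW_le L n ltac:(lra)). pose proof (Bv n).
    assert (E : (L ^ n * (/ L) ^ n = 1)%R) by (rewrite <- Rpow_mult_distr, Rinv_r, pow1; lra).
    assert (0 < (/ L) ^ n)%R by (apply pow_lt; apply Rinv_0_lt_compat; auto).
    apply Rle_trans with (/16 * L ^ n * (/ L) ^ n)%R. apply Rmult_le_compat_r. lra. nra.
    rewrite Rmult_assoc, E. lra. }
  assert (HiL : (0 < / L)%R) by (apply Rinv_0_lt_compat; auto).
  set (V := fun w => Csr (fun n => (w - w0) ^ n * v n)).
  assert (HV : forall w, (Cmod (w - w0) < / L)%R -> is_series (fun n => (w - w0) ^ n * v n) (V w)).
  { intros w Hw. apply Csr_correct. apply (term_bound v (/ L) (/16)); auto. }
  exists V. split; [|split].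
  - exists v, (/ L)%R, (/16)%R. split; auto.
  - assert (Hz : (Cmod (w0 - w0) < / L)%R) by (replace (w0 - w0) with (RtoC 0) by ring; rewrite Cmod_0; auto).
    rewrite (pser_at0 v (V w0)). reflexivity.
    eapply is_series_extC; [|apply (HV w0 Hz)]. intros n. replace (w0 - w0) with (RtoC 0) by ring. reflexivity.
  - set (r0 := Rmin rho (/ L)). assert (Hr0 : (0 < r0)%R) by (apply Rmin_glb_lt; auto).
    exists r0. split; auto. intros w Hw.
    assert (Hw1 : (Cmod (w - w0) < rho)%R) by (apply Rlt_le_trans with r0; auto; apply Rmin_l).
    assert (Hw2 : (Cmod (w - w0) < / L)%R) by (apply Rlt_le_trans with r0; auto; apply Rmin_r).
    assert (Hw3 : (Cmod (w - w0) < r1)%R) by (apply Rlt_le_trans with rho; auto; apply Rmin_l).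
    assert (Hw4 : (Cmod (w - w0) < r2)%R) by (apply Rlt_le_trans with rho; auto; apply Rmin_r).
    assert (Bb0 : forall n, (Cmod (b n) * r0 ^ n <= M)%R) by (apply (bound_mono b rho r0 M Bb); split; [lra|apply Rmin_l]).
    assert (Bv0 : forall n, (Cmod (v n) * r0 ^ n <= /16)%R) by (apply (bound_mono v (/L) r0 (/16) Bv'); split; [lra|apply Rmin_r]).
    assert (P1 := pser_mult b v (w - w0) (Bf w) (V w) r0 M (/16) Hr0 Bb0 Bv0 Hw (HB w Hw4) (HV w Hw2)).
    assert (P2 := pser_mult v v (w - w0) (V w) (V w) r0 (/16) (/16) Hr0 Bv0 Bv0 Hw (HV w Hw2) (HV w Hw2)).
    assert (P3 := is_series_scal e _ _ P2).
    assert (P4 := is_series_plus _ _ _ _ (HU w Hw3) P1).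
    assert (P5 := is_series_plus _ _ _ _ P4 P3).
    apply (is_series_C_unique (fun n => (w - w0) ^ n * v n)). apply HV; auto.
    eapply is_series_extC; [|apply P5]. intros n. cbv beta. repeat change (plus ?x ?y) with (Cplus x y).
    change (scal ?x ?y) with (Cmult x y). unfold v. rewrite (qv_eq u b e n u0 b0). fold v. ring.
Qed.

Lemma an_inv g w0 : an g w0 -> g w0 <> 0 ->
  exists h, an h w0 /\ exists r, (0 < r)%R /\ forall w, (Cmod (w - w0) < r)%R -> h w * g w = 1.
Proof.
  intros ag Hg. set (g0 := g w0).
  set (U := fun w => / g0 * g w + - (1)).
  assert (aU : an U w0) by (apply an_plus; [apply an_scal; auto | apply an_const]).
  assert (U0 : U w0 = 0) by (unfold U; fold g0; field; auto).
  destruct (an_quad (fun w => - (1) * U w) (fun w => - (1) * U w) 0 w0) as [V [aV [V0 [r [Hr HV]]]]].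
  apply an_scal; auto. apply an_scal; auto. rewrite U0; ring. rewrite U0; ring. rewrite Cmod_0; lra.
  exists (fun w => / g0 * (1 + V w)). split. apply an_scal. apply an_plus. apply an_const. auto.
  exists r. split; auto. intros w Hw. specialize (HV w Hw).
  assert (E : g w = g0 * (1 + U w)) by (unfold U; field; auto).
  rewrite E. field_simplify; auto.
  assert (E2 : (1 + V w) * (1 + U w) = 1 + (V w - (- (1) * U w + - (1) * U w * V w + 0 * (V w * V w)))) by ring.
  rewrite <- HV in E2. replace (V w - V w) with (RtoC 0) in E2 by ring.
  replace (1 + 0) with (RtoC 1) in E2 by ring.
  transitivity ((1 + V w) * (1 + U w)). ring. auto.
Qed.

Lemma an_sqrt g w0 s0 : an g w0 -> g w0 = s0 * s0 -> s0 <> 0 ->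
  exists S, an S w0 /\ S w0 = s0 /\ exists r, (0 < r)%R /\ forall w, (Cmod (w - w0) < r)%R -> S w * S w = g w.
Proof.
  intros ag Hg Hs. 
  set (U := fun w => / (s0 * s0) * g w + - (1)).
  assert (aU : an U w0) by (apply an_plus; [apply an_scal; auto | apply an_const]).
  assert (U0 : U w0 = 0) by (unfold U; rewrite Hg; field; auto).
  destruct (an_quad (fun w => / 2 * U w) (fun _ => 0) (- / 2) w0) as [V [aV [V0 [r [Hr HV]]]]].
  apply an_scal; auto. apply an_const. rewrite U0; ring. reflexivity.
  rewrite Cmod_opp, Cmod_inv. replace (RtoC 2) with (RtoC 2%R) by reflexivity. rewrite Cmod_R, Rabs_pos_eq by lra. lra.
  intros H2. injection H2. lra.
  exists (fun w => s0 * (1 + V w)). split. apply an_scal. apply an_plus. apply an_const. auto.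
  split. rewrite V0. ring.
  exists r. split; auto. intros w Hw. specialize (HV w Hw).
  assert (E : g w = s0 * s0 * (1 + U w)) by (unfold U; field; auto).
  rewrite E.
  assert (E2 : U w = 2 * V w + V w * V w).
  { rewrite HV at 1. field. }
  rewrite E2. ring.
Qed.

Lemma M2_ext (A B : M2) : m11 A = m11 B -> m12 A = m12 B -> m21 A = m21 B -> m22 A = m22 B -> A = B.
Proof. destruct A, B; simpl; intros; subst; reflexivity. Qed.

Lemma Cmult_integral' (x y : C) : x * y = 0 -> x = 0 \/ y = 0.
Proof. intros H. destruct (Ceq_dec x 0) as [|Hx]; [left; auto|right].
  replace y with (/ x * (x * y)) by (field; auto). rewrite H. ring. Qed.

Lemma Cinv_neq0 (x : C) : x <> 0 -> / x <> 0.
Proof. intros Hx H. apply Hx. replace x with (x * x * / x) by (field; auto). rewrite H. ring. Qed.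

Lemma Cmult_eq_reg_l (c x y : C) : c * x = c * y -> c <> 0 -> x = y.
Proof. intros H Hc. replace x with (/ c * (c * x)) by (field; auto). rewrite H. field; auto. Qed.

Lemma spec_alg (A : M2) (c r1 r2 k1 k2 : C) : c <> 0 -> r1 <> r2 -> r1 + r2 = M2tr A -> r1 * r2 = M2det A ->
  k1 * (r1 - r2) = 1 -> k2 * (r2 - r1) = 1 ->
  spectral_projections (M2scale c A)
    (mkM2 (k1 * (m11 A - r2)) (k1 * m12 A) (k1 * m21 A) (k1 * (m22 A - r2)))
    (mkM2 (k2 * (m11 A - r1)) (k2 * m12 A) (k2 * m21 A) (k2 * (m22 A - r1))).
Proof.
  intros Hc Hr Htr Hdet Hk1 Hk2.
  assert (Hd : r1 - r2 <> 0) by (intro H; apply Hr; apply Ceq_minus; auto).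
  assert (Hd' : r2 - r1 <> 0) by (intro H; apply Hr; symmetry; apply Ceq_minus; auto).
  assert (E1 : k1 = / (r1 - r2)) by (replace k1 with (k1 * (r1 - r2) * / (r1 - r2)) by (field; auto); rewrite Hk1; ring).
  assert (E2 : k2 = / (r2 - r1)) by (replace k2 with (k2 * (r2 - r1) * / (r2 - r1)) by (field; auto); rewrite Hk2; ring).
  subst k1 k2. clear Hk1 Hk2.
  destruct A as [p q s t]. unfold M2tr, M2det in *; simpl in *.
  exists (c * r1), (c * r2).
  assert (Ht : t = r1 + r2 - p) by (rewrite Htr; ring). subst t. clear Htr.
  destruct (Ceq_dec q 0) as [Hq|Hq].
  - subst q. assert (H0 : (r1 - p) * (r1 - (r1 + r2 - p)) = 0).
    { replace ((r1 - p) * (r1 - (r1 + r2 - p))) with (- (r1 * r2 - p * (r1 + r2 - p) + 0 * s)) by ring. rewrite Hdet. ring. }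
    apply Cmult_integral' in H0. destruct H0 as [H0|H0].
    + assert (Ep : p = r1) by (symmetry; apply Ceq_minus; auto). subst p.
      exists (mkM2 (r1 - r2) 0 s 1).
      split. intro H; apply Hr. apply (Cmult_eq_reg_l c); auto. 
      split. unfold M2tr; simpl. ring. split. unfold M2det; simpl. ring.
      split. unfold M2det; simpl. replace ((r1 - r2) * 1 - 0 * s) with (r1 - r2) by ring. auto.
      split. apply M2_ext; simpl; ring.
      split; apply M2_ext; unfold M2inv, M2det; simpl; field; auto.
    + assert (Ep : p = r2) by (replace p with (r2 + (r1 - (r1 + r2 - p))) by ring; rewrite H0; ring). subst p.
      exists (mkM2 0 (r2 - r1) 1 s).
      split. intro H; apply Hr. apply (Cmult_eq_reg_l c); auto.
      split. unfold M2tr; simpl. ring. split. unfold M2det; simpl. ring.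
      split. unfold M2det; simpl. replace (0 * s - (r2 - r1) * 1) with (r1 - r2) by ring. auto.
      split. apply M2_ext; simpl; ring.
      split; apply M2_ext; unfold M2inv, M2det; simpl; field; auto.
  - assert (Es : s = (p * (r1 + r2 - p) - r1 * r2) / q) by (rewrite Hdet; field; auto). subst s. clear Hdet.
    exists (mkM2 q q (r1 - p) (r2 - p)).
    split. intro H; apply Hr. apply (Cmult_eq_reg_l c); auto.
    split. unfold M2tr; simpl. field; auto. split. unfold M2det; simpl. field; auto.
    assert (HdE : q * (r2 - p) - q * (r1 - p) <> 0).
    { replace (q * (r2 - p) - q * (r1 - p)) with (- (q * (r1 - r2))) by ring.
      intro H. apply (Cmult_neq_0 q (r1 - r2)); auto. replace (q * (r1 - r2)) with (- (- (q * (r1 - r2)))) by ring. rewrite H. ring. }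
    split. unfold M2det; simpl. auto.
    split. apply M2_ext; simpl; field; auto.
    split; apply M2_ext; unfold M2inv, M2det; simpl; field; split; auto.
Qed.

Definition M2an (F : C -> M2) (w0 : C) : Prop :=
  an (fun w => m11 (F w)) w0 /\ an (fun w => m12 (F w)) w0 /\ an (fun w => m21 (F w)) w0 /\ an (fun w => m22 (F w)) w0.

Lemma M2an_analytic F w0 : M2an F w0 -> M2analytic_at F w0.
Proof. intros [A [B [C' D]]]. repeat split; apply an_analytic; auto. Qed.

Lemma M2an_mk f11 f12 f21 f22 w0 : an f11 w0 -> an f12 w0 -> an f21 w0 -> an f22 w0 ->
  M2an (fun w => mkM2 (f11 w) (f12 w) (f21 w) (f22 w)) w0.
Proof. intros; repeat split; auto. Qed.

Lemma M2an_mul F G w0 : M2an F w0 -> M2an G w0 -> M2an (fun w => M2mul (F w) (G w)) w0.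
Proof.
  intros [F1 [F2 [F3 F4]]] [G1 [G2 [G3 G4]]]. unfold M2mul.
  apply M2an_mk; apply an_plus; apply an_mult; auto.
Qed.

Lemma M2an_const A w0 : M2an (fun _ => A) w0.
Proof. repeat split; apply an_const. Qed.

Lemma M2an_pow F n w0 : M2an F w0 -> M2an (fun w => M2pow (F w) n) w0.
Proof. intros HF. induction n. apply (M2an_const M2id). simpl. apply M2an_mul; auto. Qed.

Definition Qm (e a : R) (y : C) : M2 :=
  M2mul (mkM2 1 (RtoC (e ^ 2 / a) * y) (RtoC (/ (e ^ 2 * a))) 1)
 (M2mul (mkM2 1 (RtoC (e ^ 2 * a) * y) (RtoC (a / e ^ 2)) 1)
 (M2mul (mkM2 1 (RtoC (/ a) * y) (RtoC (/ a)) 1)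
        (mkM2 1 (RtoC a * y) (RtoC a) 1))).

Lemma M2an_Qm e a y w0 : an y w0 -> M2an (fun w => Qm e a (y w)) w0.
Proof.
  intros Hy. unfold Qm.
  assert (K : forall k k' : R, M2an (fun w => mkM2 1 (RtoC k * y w) (RtoC k') 1) w0).
  { intros k k'. apply M2an_mk; try apply an_const. apply an_scal; auto. }
  apply M2an_mul. apply K. apply M2an_mul. apply K. apply M2an_mul. apply K. apply K.
Qed.

Lemma Phi_Qm (e a : R) (w : C) : e <> 0%R -> a <> 0%R -> w <> 0 ->
  Phi e a w = M2scale (/ ((1 - RtoC a ^ 2 / w) ^ 2)) (Qm e a (/ w)).
Proof.
  intros He Ha Hw. unfold Phi, Qm.
  assert (Hec : RtoC e <> 0) by (intro H; apply He; injection H; auto).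
  assert (Hac : RtoC a <> 0) by (intro H; apply Ha; injection H; auto).
  assert (He2 : (e ^ 2 <> 0)%R) by (apply pow_nonzero; auto).
  assert (Hea : (e ^ 2 * a <> 0)%R) by (apply Rmult_integral_contrapositive_currified; auto).
  assert (X1 : RtoC (e ^ 2 / a) = RtoC e ^ 2 / RtoC a) by (rewrite RtoC_div, RtoC_pow; auto).
  assert (X2 : RtoC (/ (e ^ 2 * a)) = / (RtoC e ^ 2 * RtoC a)) by (rewrite RtoC_inv, RtoC_mult, RtoC_pow; auto).
  assert (X3 : RtoC (e ^ 2 * a) = RtoC e ^ 2 * RtoC a) by (rewrite RtoC_mult, RtoC_pow; auto).
  assert (X4 : RtoC (a / e ^ 2) = RtoC a / RtoC e ^ 2) by (rewrite RtoC_div, RtoC_pow; auto).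
  assert (X5 : RtoC (/ a) = / RtoC a) by (rewrite RtoC_inv; auto).
  rewrite X1, X2, X3, X4, X5.
  f_equal.
  replace (RtoC e ^ 2 / (RtoC a * w)) with (RtoC e ^ 2 / RtoC a * / w) by (field; auto).
  replace (/ (RtoC a * w)) with (/ RtoC a * / w) by (field; auto).
  reflexivity.
Qed.

Lemma M2mul_scale s t A B : M2mul (M2scale s A) (M2scale t B) = M2scale (s * t) (M2mul A B).
Proof. apply M2_ext; simpl; ring. Qed.

Lemma M2pow_scale s A n : M2pow (M2scale s A) n = M2scale (s ^ n) (M2pow A n).
Proof. induction n; simpl. apply M2_ext; simpl; ring. rewrite IHn, M2mul_scale. reflexivity. Qed.

Lemma M2det_mul A B : M2det (M2mul A B) = M2det A * M2det B.
Proof. destruct A, B; unfold M2det; simpl; ring. Qed.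

Lemma M2det_pow A n : M2det (M2pow A n) = M2det A ^ n.
Proof. induction n; simpl. unfold M2det; simpl; ring. rewrite M2det_mul, IHn. reflexivity. Qed.

Lemma M2det_Qm e a y : e <> 0%R -> a <> 0%R ->
  M2det (Qm e a y) = (1 - RtoC (/ a ^ 2) * y) ^ 2 * (1 - RtoC (a ^ 2) * y) ^ 2.
Proof.
  intros He Ha. unfold Qm. rewrite !M2det_mul. unfold M2det; cbn [m11 m12 m21 m22].
  assert (E1 : RtoC (e ^ 2 / a) * y * RtoC (/ (e ^ 2 * a)) = RtoC (/ a ^ 2) * y).
  { rewrite <- (Cmult_comm (RtoC _)), Cmult_assoc, <- RtoC_mult. f_equal. f_equal. field. split; auto. }
  assert (E2 : RtoC (e ^ 2 * a) * y * RtoC (a / e ^ 2) = RtoC (a ^ 2) * y).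
  { rewrite <- (Cmult_comm (RtoC _)), Cmult_assoc, <- RtoC_mult. f_equal. f_equal. field. auto. }
  assert (E3 : RtoC (/ a) * y * RtoC (/ a) = RtoC (/ a ^ 2) * y).
  { rewrite <- (Cmult_comm (RtoC _)), Cmult_assoc, <- RtoC_mult. f_equal. f_equal. field. auto. }
  assert (E4 : RtoC a * y * RtoC a = RtoC (a ^ 2) * y).
  { rewrite <- (Cmult_comm (RtoC _)), Cmult_assoc, <- RtoC_mult. f_equal. f_equal. ring. }
  rewrite !Cmult_1_l, E1, E2, E3, E4. ring.
Qed.

Definition pm (A : M2) : Prop := exists p q s t : R, A = mkM2 (RtoC p) (RtoC q) (RtoC s) (RtoC t) /\
  (0 < p)%R /\ (0 <= q)%R /\ (0 <= s)%R /\ (0 < t)%R.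

Lemma pm_mul A B : pm A -> pm B -> pm (M2mul A B).
Proof.
  intros [p [q [s [t [EA Hp]]]]] [p' [q' [s' [t' [EB Hp']]]]]. subst.
  exists (p * p' + q * s')%R, (p * q' + q * t')%R, (s * p' + t * s')%R, (s * q' + t * t')%R.
  split. apply M2_ext; simpl; rewrite RtoC_plus, !RtoC_mult; reflexivity.
  destruct Hp as [? [? [? ?]]], Hp' as [? [? [? ?]]]. repeat split; nra.
Qed.

Lemma pm_id : pm M2id.
Proof. exists 1%R, 0%R, 0%R, 1%R. repeat split; try lra. Qed.

Lemma pm_pow A n : pm A -> pm (M2pow A n).
Proof. intros H; induction n. apply pm_id. simpl. apply pm_mul; auto. Qed.

Lemma pm_fac (k k' x : R) : (0 <= k)%R -> (0 <= k')%R -> (0 < x)%R -> pm (mkM2 1 (RtoC k * / RtoC x) (RtoC k') 1).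
Proof.
  intros. exists 1%R, (k / x)%R, k', 1%R. split. rewrite RtoC_div by lra. reflexivity.
  repeat split; try lra. apply Rmult_le_pos; auto. left; apply Rinv_0_lt_compat; auto.
Qed.

Lemma pm_Qm e a x : (0 < e)%R -> (0 < a)%R -> (0 < x)%R -> pm (Qm e a (/ RtoC x)).
Proof.
  intros He Ha Hx. unfold Qm.
  assert (P : forall k k', (0 < k)%R -> (0 < k')%R -> pm (mkM2 1 (RtoC k * / RtoC x) (RtoC k') 1)).
  { intros; apply pm_fac; auto; lra. }
  apply pm_mul; [apply P|apply pm_mul; [apply P|apply pm_mul; [apply P|apply P]]];
  unfold Rdiv; repeat (apply pow_lt || apply Rinv_0_lt_compat || apply Rmult_lt_0_compat); auto.
Qed.

Lemma punct (w0 b : C) : exists d0, (0 < d0)%R /\ forall w, (0 < Cmod (w - w0) < d0)%R -> w <> b.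
Proof.
  destruct (Ceq_dec w0 b) as [E|E].
  - exists 1%R. split. lra. intros w Hw Hwb. subst. replace (b - b) with (RtoC 0) in Hw by ring. rewrite Cmod_0 in Hw. lra.
  - exists (Cmod (w0 - b)). split. apply Cmod_gt_0. intro H; apply E; apply Ceq_minus; auto.
    intros w Hw Hwb. subst. replace (b - w0) with (- (w0 - b)) in Hw by ring. rewrite Cmod_opp in Hw. lra.
Qed.

Lemma Cpow_neq0 (x : C) n : x <> 0 -> x ^ n <> 0.
Proof. intros Hx. induction n; simpl. intro H; injection H; lra. apply Cmult_neq_0; auto. Qed.

Lemma Rmin4 a b c d : (0 < a)%R -> (0 < b)%R -> (0 < c)%R -> (0 < d)%R ->
  exists m, (0 < m /\ m <= a /\ m <= b /\ m <= c /\ m <= d)%R.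
Proof.
  intros. exists (Rmin (Rmin a b) (Rmin c d)). repeat split.
  repeat apply Rmin_glb_lt; auto.
  eapply Rle_trans; apply Rmin_l. eapply Rle_trans. apply Rmin_l. apply Rmin_r.
  eapply Rle_trans. apply Rmin_r. apply Rmin_l. eapply Rle_trans. apply Rmin_r. apply Rmin_r.
Qed.

Lemma main_at (alpha beta a x0 : R) (N n : nat) : (0 < alpha < 1)%R -> (0 < beta < 1)%R -> (0 < a <= 1)%R ->
  (N / 2)%nat = n -> (1 <= n)%nat -> (0 < x0)%R ->
  M2det (Qm alpha a (/ RtoC x0)) = 0 -> M2det (Qm beta a (/ RtoC x0)) = 0 ->
  projections_analytic_at alpha beta a N (RtoC x0).
Proof.
  intros Hal Hbe Ha HN Hn Hx D1 D2.
  set (w0 := RtoC x0).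
  assert (Hw0 : w0 <> 0) by (unfold w0; intro H; injection H; lra).
  destruct (an_inv (fun w => w) w0 (an_id w0) Hw0) as [y [ay [ry [Hry Hy]]]].
  set (P := fun w => M2mul (M2pow (Qm alpha a (y w)) n) (M2pow (Qm beta a (y w)) n)).
  assert (aP : M2an P w0).
  { apply M2an_mul; apply M2an_pow; apply M2an_Qm; auto. }
  destruct aP as [a11 [a12 [a21 a22]]].
  set (t := fun w => m11 (P w) + m22 (P w)).
  assert (at' : an t w0) by (apply an_plus; auto).
  set (dl := fun w => m11 (P w) * m22 (P w) + - (1) * (m12 (P w) * m21 (P w))).
  assert (adl : an dl w0) by (apply an_plus; [apply an_mult; auto | apply an_scal; apply an_mult; auto]).
  set (D := fun w => t w * t w + (- (4)) * dl w).
  assert (aD : an D w0) by (apply an_plus; [apply an_mult; auto | apply an_scal; auto]).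
  assert (Hy0 : y w0 = / w0).
  { assert (H := Hy w0 ltac:(replace (w0 - w0) with (RtoC 0) by ring; rewrite Cmod_0; auto)).
    replace (y w0) with (y w0 * w0 * / w0) by (field; auto). rewrite H. ring. }
  assert (EP0 : P w0 = M2mul (M2pow (Qm alpha a (/ RtoC x0)) n) (M2pow (Qm beta a (/ RtoC x0)) n)).
  { unfold P. rewrite Hy0. reflexivity. }
  assert (dl0 : dl w0 = 0).
  { transitivity (M2det (P w0)). unfold dl, M2det. ring.
    rewrite EP0, M2det_mul, !M2det_pow, D1, D2. destruct n. lia. simpl. ring. }
  assert (Ht0 : t w0 <> 0).
  { assert (Hpm : pm (P w0)).
    { rewrite EP0. apply pm_mul; apply pm_pow; apply pm_Qm; lra. }
    destruct Hpm as [p [q [s [t' [E [Hp [_ [_ Ht']]]]]]]].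
    unfold t. rewrite E. simpl. rewrite <- RtoC_plus. intro H; injection H; lra. }
  set (t0 := t w0).
  assert (D0 : D w0 = t0 * t0) by (unfold D; rewrite dl0; unfold t0; ring).
  destruct (an_sqrt D w0 t0 aD D0 Ht0) as [S [aS [S0 [rS [HrS HS]]]]].
  destruct (an_inv S w0 aS ltac:(rewrite S0; auto)) as [h [ah [rh [Hrh Hh]]]].
  set (r1 := fun w => / 2 * (t w + S w)).
  set (r2 := fun w => / 2 * (t w + - (1) * S w)).
  assert (ar1 : an r1 w0) by (apply an_scal; apply an_plus; auto).
  assert (ar2 : an r2 w0) by (apply an_scal; apply an_plus; auto; apply an_scal; auto).
  set (F1 := fun w => mkM2 (h w * (m11 (P w) + - (1) * r2 w)) (h w * m12 (P w)) (h w * m21 (P w)) (h w * (m22 (P w) + - (1) * r2 w))).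
  set (F2 := fun w => mkM2 (- (1) * h w * (m11 (P w) + - (1) * r1 w)) (- (1) * h w * m12 (P w)) (- (1) * h w * m21 (P w)) (- (1) * h w * (m22 (P w) + - (1) * r1 w))).
  destruct (punct w0 (RtoC a ^ 2)) as [d0 [Hd0 Hpunct]].
  destruct (Rmin4 ry rS rh d0 Hry HrS Hrh Hd0) as [d [Hd [Hd1 [Hd2 [Hd3 Hd4]]]]].
  exists d, F1, F2. split; auto. split; [|split].
  - apply M2an_analytic. unfold F1.
    apply (M2an_mk (fun w => h w * (m11 (P w) + - (1) * r2 w)) (fun w => h w * m12 (P w))
             (fun w => h w * m21 (P w)) (fun w => h w * (m22 (P w) + - (1) * r2 w))).
    apply an_mult. exact ah. apply an_plus. exact a11. apply an_scal. exact ar2.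
    apply an_mult. exact ah. exact a12.
    apply an_mult. exact ah. exact a21.
    apply an_mult. exact ah. apply an_plus. exact a22. apply an_scal. exact ar2.
  - apply M2an_analytic. unfold F2.
    assert (amh : an (fun w => - (1) * h w) w0) by (apply an_scal; exact ah).
    apply (M2an_mk (fun w => - (1) * h w * (m11 (P w) + - (1) * r1 w)) (fun w => - (1) * h w * m12 (P w))
             (fun w => - (1) * h w * m21 (P w)) (fun w => - (1) * h w * (m22 (P w) + - (1) * r1 w))).
    apply (an_mult (fun w => - (1) * h w)). exact amh. apply an_plus. exact a11. apply an_scal. exact ar1.
    apply (an_mult (fun w => - (1) * h w)). exact amh. exact a12.
    apply (an_mult (fun w => - (1) * h w)). exact amh. exact a21.
    apply (an_mult (fun w => - (1) * h w)). exact amh. apply an_plus. exact a22. apply an_scal. exact ar1.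
  - intros w [Hw1 Hw2].
    assert (Hyw := Hy w ltac:(lra)). assert (HSw := HS w ltac:(lra)). assert (Hhw := Hh w ltac:(lra)).
    assert (Hwb := Hpunct w ltac:(lra)).
    assert (Hwn : w <> 0) by (intro H; rewrite H, Cmult_0_r in Hyw; injection Hyw; lra).
    assert (Eyw : y w = / w) by (replace (y w) with (y w * w * / w) by (field; auto); rewrite Hyw; ring).
    set (s := / ((1 - RtoC a ^ 2 / w) ^ 2)).
    assert (Hs : s <> 0).
    { apply Cinv_neq0. apply Cpow_neq0. intro H. apply Hwb.
      replace w with (w * (1 - RtoC a ^ 2 / w) + RtoC a ^ 2) by (field; auto). rewrite H. ring. }
    assert (Ephi : phi alpha beta a N w = M2scale (s ^ n * s ^ n) (P w)).
    { unfold phi. rewrite HN. rewrite !Phi_Qm by (auto; lra). rewrite !M2pow_scale, M2mul_scale.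
      unfold P. rewrite Eyw. reflexivity. }
    rewrite Ephi.
    assert (HSn : S w <> 0) by (intro H; rewrite H, Cmult_0_r in Hhw; injection Hhw; lra).
    assert (E1 : F1 w = mkM2 (h w * (m11 (P w) - r2 w)) (h w * m12 (P w)) (h w * m21 (P w)) (h w * (m22 (P w) - r2 w)))
      by (apply M2_ext; simpl; ring).
    assert (E2 : F2 w = mkM2 ((- h w) * (m11 (P w) - r1 w)) ((- h w) * m12 (P w)) ((- h w) * m21 (P w)) ((- h w) * (m22 (P w) - r1 w)))
      by (apply M2_ext; simpl; ring).
    rewrite E1, E2. apply spec_alg.
    + apply Cmult_neq_0; apply Cpow_neq0; auto.
    + intro H. apply HSn. replace (S w) with (r1 w - r2 w) by (unfold r1, r2; field). rewrite H. ring.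
    + unfold r1, r2, M2tr, t. field.
    + transitivity (/ 4 * (t w * t w - S w * S w)). unfold r1, r2. field.
      rewrite HSw. unfold D, dl, M2det. field.
    + replace (r1 w - r2 w) with (S w) by (unfold r1, r2; field). auto.
    + replace (r2 w - r1 w) with (- S w) by (unfold r1, r2; field). rewrite <- Hhw. ring.
Qed.

Theorem lemma5p2 (alpha beta a : R) (N : nat) :
  (0 < alpha < 1)%R -> (0 < beta < 1)%R -> (0 < a <= 1)%R ->
  Nat.Even N -> (0 < N)%nat ->
  projections_analytic_at alpha beta a N (RtoC (a ^ 2)) /\
  projections_analytic_at alpha beta a N (RtoC (/ a ^ 2)).
Proof.
  intros Hal Hbe Ha [m Hm] HN.
  assert (Hdiv : (N / 2 = m)%nat) by (subst N; rewrite Nat.mul_comm; apply Nat.div_mul; lia).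
  assert (Hm1 : (1 <= m)%nat) by lia.
  assert (Ha0 : a <> 0%R) by lra.
  assert (Ha2 : (0 < a ^ 2)%R) by (apply pow_lt; lra).
  assert (Hia2 : (0 < / a ^ 2)%R) by (apply Rinv_0_lt_compat; auto).
  split.
  - apply (main_at alpha beta a (a ^ 2) N m); auto;
    rewrite M2det_Qm by lra;
    replace (RtoC (a ^ 2) * / RtoC (a ^ 2)) with (RtoC 1) by (field; intro H; injection H; lra); ring.
  - assert (Hc : RtoC (/ a ^ 2) <> 0). { intro H; injection H; intro H0. replace (a * (a * 1))%R with (a ^ 2)%R in H0 by ring. lra. }
    apply (main_at alpha beta a (/ a ^ 2) N m); auto;
    rewrite M2det_Qm by lra;
    replace (RtoC (/ a ^ 2) * / RtoC (/ a ^ 2)) with (RtoC 1) by (field; exact Hc); ring.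
Qed.
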